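(* Let $Q\in\mathcal{P}$ have balance coefficient $\beta>\tfrac12$. Then for every $0<v<4(\beta-\tfrac12)$, $$D^*(v,Q)=\mathrm{KL}_2\!\left(\beta-\tfrac{v}{2},\,\beta\right).$$
   Context: Let $(\Omega,\mathcal{F},\mu)$ be a finite or $\sigma$-finite measure space, and let $\mathcal{P}$ be the set of probability measures on $(\Omega,\mathcal{F})$ absolutely continuous with respect to $\mu$. For $P,Q\in\mathcal{P}$ the lower-case letters $p,q$ denote their densities with respect to $\mu$. The Kullback–Leibler divergence is $D(P\Vert Q)=\int \ln\frac{dP}{dQ}\,dP$ if $P\ll Q$, and $+\infty$ otherwise. The total variation distance is $V(P,Q)=\int_\Omega|p-q|\,d\mu$. For $v>0$ define $D^*(v,Q)=\inf\{D(P\Vert Q): P\in\mathcal{P},\ V(P,Q)\ge v\}$, with $\inf\emptyset=+\infty$. For $p,q\in[0,1]$ let $\mathrm{KL}_2(p,q)=p\ln\frac{p}{q}+(1-p)\ln\frac{1-p}{1-q}$, with the conventions $0\ln(0/x)=0$ and $a\ln(a/0)=+\infty$ for $a>0$. The range of $Q$ is $\mathcal{R}(Q)=\{Q(A):A\in\mathcal{F}\}$. The balance coefficient of $Q$ is $\beta=\inf\{x\in\mathcal{R}(Q): x\ge\tfrac12\}$. *)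

(* Defs.v *)
From HB Require Import structures.
From mathcomp Require Import all_boot all_order all_algebra.
From mathcomp Require Import all_classical all_reals all_analysis.
Set Implicit Arguments. Unset Strict Implicit. Unset Printing Implicit Defensive.
Import Order.TTheory GRing.Theory Num.Theory.
Local Open Scope classical_set_scope.
Local Open Scope ring_scope.

Section Defs.
Context (d : measure_display) (T : measurableType d) (R : realType)
        (mu : {measure set T -> \bar R}).

(* p is the density (w.r.t. mu) of a probability measure P in the class 𝒫 *)
Definition is_density (p : T -> R) : Prop :=
  [/\ measurable_fun setT p, (forall x, 0 <= p x)
    & (\int[mu]_x (p x)%:E = 1)%E].

Definition prob_of (p : T -> R) (A : set T) : \bar R :=
  (\int[mu]_(x in A) (p x)%:E)%E.

Definition abs_cont (p q : T -> R) : Prop :=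
  forall A, measurable A -> prob_of q A = 0%E -> prob_of p A = 0%E.

(* Kullback-Leibler divergence D(P||Q) = \int ln (dP/dQ) dP
   = \int p ln (p/q) dmu when P << Q (dP/dQ = p/q Q-a.e.), +oo otherwise. *)
Definition KL (p q : T -> R) : \bar R :=
  if `[< abs_cont p q >] then (\int[mu]_x (p x * ln (p x / q x))%:E)%E
  else +oo%E.

Definition Vdist (p q : T -> R) : \bar R :=
  (\int[mu]_x (`|p x - q x|)%:E)%E.

(* D^*(v,Q) = inf { D(P||Q) : P in 𝒫, V(P,Q) >= v } (inf of empty = +oo) *)
Definition Dstar (v : R) (q : T -> R) : \bar R :=
  ereal_inf [set e | exists p, [/\ is_density p, (v%:E <= Vdist p q)%E
                                 & KL p q = e]].

Definition rangeQ (q : T -> R) : set R :=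
  [set x | exists A, measurable A /\ prob_of q A = x%:E].

Definition balance (q : T -> R) : R :=
  inf [set x | rangeQ q x /\ 1 / 2 <= x].

End Defs.

Definition klterm {R : realType} (a b : R) : \bar R :=
  if a == 0 then 0%E else if b == 0 then +oo%E else (a * ln (a / b))%:E.

Definition KL2 {R : realType} (p q : R) : \bar R :=
  (klterm p q + klterm (1 - p) (1 - q))%E.

(* Main.v *)
Require Import Defs.
From HB Require Import structures.
From mathcomp Require Import all_boot all_order all_algebra.
From mathcomp Require Import all_classical all_reals all_analysis.
From mathcomp Require Import ring lra measurable_realfun.
Set Implicit Arguments. Unset Strict Implicit. Unset Printing Implicit Defensive.
Import Order.TTheory GRing.Theory Num.Theory numFieldNormedType.Exports.
Local Open Scope classical_set_scope.
Local Open Scope ring_scope.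

Section RA.
Variable R : realType.

Lemma mono_helper (f df : R -> R) (a b : R) : a <= b ->
  (forall x, a <= x -> x <= b -> is_derive x 1 f (df x)) ->
  (forall x, a < x -> x < b -> 0 <= df x) -> f a <= f b.
Proof.
move=> ab fd dpos; rewrite -subr_ge0.
case: (ltgtP a b) ab => // [altb|->] _; last by rewrite subrr.
have [c cab ->] : exists2 c, c \in `]a, b[%R & f b - f a = df c * (b - a).
  apply: MVT => //.
    move=> x; rewrite in_itv /= => /andP[ax xb]; apply: fd.
    by rewrite ltW.
    by rewrite ltW.
  rewrite continuous_subspace_in => t tA; apply: continuous_subspaceT_for.
    by rewrite inE in tA.
  move: tA; rewrite inE /= in_itv /= => /andP[ax xb].
  apply/differentiable_continuous/derivable1_diffP.
  by have [] := fd t ax xb.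
move: cab; rewrite in_itv /= => /andP[ac cb].
by rewrite mulr_ge0 // ?dpos // subr_ge0 ltW.
Qed.

Lemma is_derive_aff (c k x : R) : is_derive x 1 (fun s => c + k * s) k.
Proof.
have h := @is_deriveD _ _ _ (cst c) (k *: id) x 1 0 (k *: 1).
have := h _ _.
rewrite add0r /= => H. rewrite -[X in is_derive _ _ _ X]mulr1. exact: H.
Qed.

Lemma is_derive_lnaff (c k x : R) : 0 < c + k * x ->
  is_derive x 1 (fun s => ln (c + k * s)) (k / (c + k * x)).
Proof.
move=> hx.
have := @is_derive1_comp _ (@ln R) (fun s => c + k * s) x _ _ (is_derive1_ln hx) (is_derive_aff c k x).
by rewrite mulrC.
Qed.

Lemma is_derive_add (f g : R -> R) (df dg x : R) : is_derive x 1 f df ->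
  is_derive x 1 g dg -> is_derive x 1 (fun s => f s + g s) (df + dg).
Proof. move=> h1 h2; exact: (@is_deriveD _ _ _ f g x 1 df dg). Qed.

Lemma is_derive_mul (f g : R -> R) (df dg x : R) : is_derive x 1 f df ->
  is_derive x 1 g dg -> is_derive x 1 (fun s => f s * g s) (f x * dg + g x * df).
Proof. move=> h1 h2; exact: (@is_deriveM _ _ f g x 1 df dg). Qed.

Lemma is_derive_cst' (c x : R) : is_derive x 1 (fun _ => c) 0.
Proof. exact: is_derive_cst. Qed.

Lemma is_derive_xlnaff (c k x : R) : 0 < c + k * x ->
  is_derive x 1 (fun s => (c + k * s) * ln (c + k * s)) (k * ln (c + k * x) + k).
Proof.
move=> hx.
apply: is_derive_eq; first exact: (is_derive_mul (is_derive_aff c k x) (is_derive_lnaff hx)).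
rewrite mulrCA divff ?gt_eqF // mulr1 addrC; ring.
Qed.

End RA.

Section RA1b.
Variable R : realType.
Lemma is_derive_scale (f : R -> R) (k df x : R) : is_derive x 1 f df ->
  is_derive x 1 (fun s => k * f s) (k * df).
Proof.
move=> h; apply: (is_derive_eq (is_derive_mul (is_derive_cst' k x) h)).
by rewrite mulr0 addr0.
Qed.
End RA1b.

Section RA1c.
Variable R : realType.
Lemma cont_eps (f : R -> R) x : {for x, continuous f} ->
  forall e, 0 < e -> exists2 d, 0 < d & forall y, `|x - y| < d -> `|f x - f y| < e.
Proof.
move=> /cvgrPdist_lt H e e0; have := H e e0.
move/nbhs_normP => [d /= d0 Hd]; exists d => // y xy; exact: Hd.
Qed.

Lemma derive_cont (f : R -> R) (x df : R) : is_derive x 1 f df -> {for x, continuous f}.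
Proof.
move=> [h _]; exact/differentiable_continuous/derivable1_diffP.
Qed.
End RA1c.


Section RA2.
Variable R : realType.

Lemma Phi_ineq (b s : R) : 1/2 < b -> b < 1 -> 0 <= s -> s <= 2 * b - 1 ->
  ln (1 - b + s) - ln (1 - b) - ln (b - s) + ln b <= s / (1 - b) + s / b.
Proof.
move=> hb1 hb2 hs1 hs2.
pose m := 1 / (1 - b) + 1 / b.
pose F := fun x : R => (0 + m * x) + ((-1) * ln (1 - b + 1 * x) + ln (b + (-1) * x)).
pose dF := fun x : R => m + ((-1) * (1 / (1 - b + 1 * x)) + (-1) / (b + (-1) * x)).
have H : F 0 <= F s.
  apply: (@mono_helper _ F dF 0 s hs1) => x hx0 hxs.
    have h3 : 0 < 1 - b + 1 * x by lra.
    have h4 : 0 < b + (-1) * x by lra.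
    exact: (is_derive_add (is_derive_aff 0 m x) (is_derive_add (is_derive_scale (-1) (is_derive_lnaff h3)) (is_derive_lnaff h4))).
  have h1 : 0 < 1 - b by lra.
  have h2 : 0 < b by lra.
  have h3 : 0 < 1 - b + 1 * x by lra.
  have h4 : 0 < b + (-1) * x by lra.
  have -> : dF x = x * (b * (b + (-1) * x) - (1 - b) * (1 - b + 1 * x)) /
     ((1 - b) * (1 - b + 1 * x) * b * (b + (-1) * x)).
    rewrite /dF /m; field.
    by apply/and4P; split; apply: lt0r_neq0; lra.
  apply: mulr_ge0; last by rewrite invr_ge0 !mulr_ge0 // ltW.
  apply: mulr_ge0; first by lra.
  have -> : b * (b + (-1) * x) - (1 - b) * (1 - b + 1 * x) = 2 * b - 1 - x by ring.
  lra.
rewrite /F !mulr0 !addr0 !mul1r !mulN1r !add0r in H.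
have -> : s / (1 - b) + s / b = m * s by rewrite /m; ring.
move: H; set L1 := ln (1 - b); set L2 := ln b; set L3 := ln (1 - b + s); set L4 := ln (b - s).
set M := m * s.
lra.
Qed.

Lemma Psi_ineq (b s : R) : 1/2 <= b -> b < 1 -> 0 <= s -> s < 1 - b ->
  s / b + s / (1 - b) <= ln (b + s) - ln b - ln (1 - b - s) + ln (1 - b).
Proof.
move=> hb1 hb2 hs1 hs2.
pose m := 1 / b + 1 / (1 - b).
pose F := fun x : R => ln (b + 1 * x) + ((-1) * ln (1 - b + (-1) * x) + (-1) * (0 + m * x)).
pose dF := fun x : R => 1 / (b + 1 * x) + ((-1) * ((-1) / (1 - b + (-1) * x)) + (-1) * m).
have H : F 0 <= F s.
  apply: (@mono_helper _ F dF 0 s hs1) => x hx0 hxs.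
    have h3 : 0 < b + 1 * x by lra.
    have h4 : 0 < 1 - b + (-1) * x by lra.
    exact: (is_derive_add (is_derive_lnaff h3) (is_derive_add (is_derive_scale (-1) (is_derive_lnaff h4)) (is_derive_scale (-1) (is_derive_aff 0 m x)))).
  have h1 : 0 < 1 - b by lra.
  have h2 : 0 < b by lra.
  have h3 : 0 < b + 1 * x by lra.
  have h4 : 0 < 1 - b + (-1) * x by lra.
  have -> : dF x = x * (b * (b + 1 * x) - (1 - b) * (1 - b + (-1) * x)) /
     ((1 - b) * (1 - b + (-1) * x) * b * (b + 1 * x)).
    rewrite /dF /m; field.
    by apply/and4P; split; apply: lt0r_neq0; lra.
  apply: mulr_ge0; last by rewrite invr_ge0 !mulr_ge0 // ltW.
  apply: mulr_ge0; first by lra.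
  have -> : b * (b + 1 * x) - (1 - b) * (1 - b + (-1) * x) = 2 * b - 1 + x by ring.
  lra.
rewrite /F !mulr0 !addr0 !mul1r !mulN1r !add0r in H.
have -> : s / b + s / (1 - b) = m * s by rewrite /m; ring.
move: H; set L1 := ln (1 - b); set L2 := ln b; set L3 := ln (b + s); set L4 := ln (1 - b - s).
set M := m * s.
lra.
Qed.

Lemma G_ineq (b s : R) : 1/2 <= b -> b < 1 -> 0 <= s -> s < 1 - b ->
  (b - s) * (ln (b - s) - ln b) + (1 - b + s) * (ln (1 - b + s) - ln (1 - b))
  <= (b + s) * (ln (b + s) - ln b) + (1 - b - s) * (ln (1 - b - s) - ln (1 - b)).
Proof.
move=> hb1 hb2 hs1 hs2.
pose m := 2 * ln (1 - b) - 2 * ln b.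
pose F := fun x : R => (b + 1 * x) * ln (b + 1 * x) + ((1 - b + (-1) * x) * ln (1 - b + (-1) * x)
   + ((-1) * ((b + (-1) * x) * ln (b + (-1) * x)) + ((-1) * ((1 - b + 1 * x) * ln (1 - b + 1 * x))
   + (0 + m * x)))).
pose dF := fun x : R => (1 * ln (b + 1 * x) + 1) + (((-1) * ln (1 - b + (-1) * x) + (-1))
   + ((-1) * ((-1) * ln (b + (-1) * x) + (-1)) + ((-1) * (1 * ln (1 - b + 1 * x) + 1) + m))).
have H : F 0 <= F s.
  apply: (@mono_helper _ F dF 0 s hs1) => x hx0 hxs.
    have h3 : 0 < b + 1 * x by lra.
    have h4 : 0 < 1 - b + (-1) * x by lra.
    have h5 : 0 < b + (-1) * x by lra.
    have h6 : 0 < 1 - b + 1 * x by lra.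
    exact: (is_derive_add (is_derive_xlnaff h3) (is_derive_add (is_derive_xlnaff h4)
      (is_derive_add (is_derive_scale (-1) (is_derive_xlnaff h5))
      (is_derive_add (is_derive_scale (-1) (is_derive_xlnaff h6)) (is_derive_aff 0 m x))))).
  have h1 : 0 < 1 - b by lra.
  have h2 : 0 < b by lra.
  have h3 : 0 < b + x by lra.
  have h4 : 0 < 1 - b - x by lra.
  have h5 : 0 < b - x by lra.
  have h6 : 0 < 1 - b + x by lra.
  rewrite /dF /m !mul1r !mulN1r.
  have E1 : ln (b + x) + ln (b - x) + (ln (1 - b) + ln (1 - b)) =
      ln ((b + x) * (b - x) * ((1 - b) * (1 - b))).
    by rewrite !lnM // ?posrE // ?mulr_gt0.
  have E2 : ln (1 - b - x) + ln (1 - b + x) + (ln b + ln b) =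
      ln ((1 - b - x) * (1 - b + x) * (b * b)).
    by rewrite !lnM // ?posrE // ?mulr_gt0.
  have : ln ((1 - b - x) * (1 - b + x) * (b * b)) <= ln ((b + x) * (b - x) * ((1 - b) * (1 - b))).
    rewrite ler_ln ?posrE ?mulr_gt0 //.
    have -> : (1 - b - x) * (1 - b + x) * (b * b) = (1 - b) ^+ 2 * b ^+ 2 - x ^+ 2 * b ^+ 2 by ring.
    have -> : (b + x) * (b - x) * ((1 - b) * (1 - b)) = (1 - b) ^+ 2 * b ^+ 2 - x ^+ 2 * (1 - b) ^+ 2 by ring.
    suff : x ^+ 2 * (1 - b) ^+ 2 <= x ^+ 2 * b ^+ 2 by lra.
    apply: ler_wpM2l; first exact: sqr_ge0.
    rewrite -subr_ge0; have -> : b ^+ 2 - (1 - b) ^+ 2 = 2 * b - 1 by ring.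
    lra.
  rewrite -E1 -E2.
  set L1 := ln (b + x); set L2 := ln (b - x); set L3 := ln (1 - b); set L4 := ln (1 - b - x);
  set L5 := ln (1 - b + x); set L6 := ln b.
  lra.
rewrite /F !mulr0 !addr0 !mul1r !mulN1r !add0r in H.
move: H; rewrite -subr_ge0 => H; rewrite -subr_ge0; apply: (le_trans H).
rewrite le_eqVlt; apply/orP; left; apply/eqP; rewrite /m; ring.
Qed.

Definition LB (A B x y : R) := (ln A + 1) * x - A * y + (ln B + 1) * (1 - x) - B * (1 - y).
Definition Kf (b s : R) := (b - s) * (ln (b - s) - ln b) + (1 - b + s) * (ln (1 - b + s) - ln (1 - b)).

Lemma caseI (b s x y : R) : 1/2 < b -> b < 1 -> 0 <= s -> s <= 2 * b - 1 ->
  y <= 1 - b -> s <= x - y ->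
  Kf b s <= LB ((1 - b + s) / (1 - b)) ((b - s) / b) x y.
Proof.
move=> hb1 hb2 hs1 hs2 hy hxy.
have h1 : 0 < 1 - b by lra.
have h2 : 0 < b by lra.
have h3 : 0 < 1 - b + s by lra.
have h4 : 0 < b - s by lra.
have lA : ln ((1 - b + s) / (1 - b)) = ln (1 - b + s) - ln (1 - b) by rewrite ln_div ?posrE.
have lB : ln ((b - s) / b) = ln (b - s) - ln b by rewrite ln_div ?posrE.
have Dge0 : 0 <= ln ((1 - b + s) / (1 - b)) - ln ((b - s) / b).
  have : 0 <= ln ((1 - b + s) / (1 - b)) by rewrite ln_ge0 // ler_pdivlMr // mul1r; lra.
  have : ln ((b - s) / b) <= 0 by rewrite ln_le0 // ler_pdivrMr // mul1r; lra.
  lra.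
have DE := Phi_ineq hb1 hb2 hs1 hs2.
set D := ln ((1 - b + s) / (1 - b)) - ln ((b - s) / b) in Dge0.
set E := (1 - b + s) / (1 - b) - (b - s) / b.
have HE : E = s / (1 - b) + s / b.
  rewrite /E; field; apply/andP; split; apply: lt0r_neq0; lra.
have DE' : D <= E by rewrite HE /D lA lB; lra.
have p1 : 0 <= (x - y - s) * D by apply: mulr_ge0 => //; lra.
have p2 : 0 <= (1 - b - y) * (E - D) by apply: mulr_ge0; lra.
have -> : LB ((1 - b + s) / (1 - b)) ((b - s) / b) x y =
  Kf b s + (x - y - s) * D + (1 - b - y) * (E - D).
  rewrite /LB /Kf /D /E lA lB.
  have e1 : (1 - b + s) / (1 - b) * y = (1 - b + s) - (1 - b + s) / (1 - b) * (1 - b - y).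
    field; apply: lt0r_neq0; lra.
  have e2 : (b - s) / b * (1 - y) = (b - s) + (b - s) / b * (1 - b - y).
    field; apply: lt0r_neq0; lra.
  rewrite e1 e2; ring.
lra.
Qed.

Definition K2 (b s : R) := (b + s) * (ln (b + s) - ln b) + (1 - b - s) * (ln (1 - b - s) - ln (1 - b)).

Lemma caseII (b s x y : R) : 1/2 < b -> b < 1 -> 0 <= s -> s < 1 - b ->
  b <= y -> s <= x - y ->
  Kf b s <= LB ((b + s) / b) ((1 - b - s) / (1 - b)) x y.
Proof.
move=> hb1 hb2 hs1 hs2 hy hxy.
have h1 : 0 < 1 - b by lra.
have h2 : 0 < b by lra.
have h3 : 0 < b + s by lra.
have h4 : 0 < 1 - b - s by lra.
have lA : ln ((b + s) / b) = ln (b + s) - ln b by rewrite ln_div ?posrE.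
have lB : ln ((1 - b - s) / (1 - b)) = ln (1 - b - s) - ln (1 - b) by rewrite ln_div ?posrE.
have Dge0 : 0 <= ln ((b + s) / b) - ln ((1 - b - s) / (1 - b)).
  have : 0 <= ln ((b + s) / b) by rewrite ln_ge0 // ler_pdivlMr // mul1r; lra.
  have : ln ((1 - b - s) / (1 - b)) <= 0 by rewrite ln_le0 // ler_pdivrMr // mul1r; lra.
  lra.
have DE := Psi_ineq (ltW hb1) hb2 hs1 hs2.
have G := G_ineq (ltW hb1) hb2 hs1 hs2.
set D := ln ((b + s) / b) - ln ((1 - b - s) / (1 - b)) in Dge0.
set E := (b + s) / b - (1 - b - s) / (1 - b).
have HE : E = s / b + s / (1 - b).
  rewrite /E; field; apply/andP; split; apply: lt0r_neq0; lra.
have DE' : E <= D by rewrite HE /D lA lB; lra.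
have p1 : 0 <= (x - y - s) * D by apply: mulr_ge0 => //; lra.
have p2 : 0 <= (y - b) * (D - E) by apply: mulr_ge0; lra.
have -> : LB ((b + s) / b) ((1 - b - s) / (1 - b)) x y =
  K2 b s + (x - y - s) * D + (y - b) * (D - E).
  rewrite /LB /K2 /D /E lA lB.
  have e1 : (b + s) / b * y = (b + s) + (b + s) / b * (y - b).
    field; apply: lt0r_neq0; lra.
  have e2 : (1 - b - s) / (1 - b) * (1 - y) = (1 - b - s) - (1 - b - s) / (1 - b) * (y - b).
    field; apply: lt0r_neq0; lra.
  rewrite e1 e2; ring.
rewrite /Kf /K2 in G *.
lra.
Qed.

Lemma Kf_cont_s (b s0 : R) : 0 < b - s0 -> 0 < 1 - b + s0 ->
  forall e, 0 < e -> exists2 d, 0 < d & forall s, `|s0 - s| < d -> `|Kf b s0 - Kf b s| < e.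
Proof.
move=> h1 h2.
pose c0 := - b * ln b - (1 - b) * ln (1 - b).
pose F := fun s : R => (b + (-1) * s) * ln (b + (-1) * s) + ((1 - b + 1 * s) * ln (1 - b + 1 * s)
   + (c0 + (ln b - ln (1 - b)) * s)).
have FK : forall s, F s = Kf b s.
  move=> s; rewrite /F /Kf /c0 !mul1r !mulN1r; ring.
have h1' : 0 < b + (-1) * s0 by rewrite mulN1r.
have h2' : 0 < 1 - b + 1 * s0 by rewrite mul1r.
have D := is_derive_add (is_derive_xlnaff h1') (is_derive_add (is_derive_xlnaff h2') (is_derive_aff c0 (ln b - ln (1 - b)) s0)).
have := cont_eps (derive_cont D).
move=> H e e0; have [d d0 Hd] := H e e0; exists d => // s hs.
by rewrite -!FK; apply: Hd.
Qed.

Lemma Kf_cont_b (s b0 : R) : 0 <= s -> 0 < b0 - s -> 0 < b0 -> b0 < 1 ->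
  forall e, 0 < e -> exists2 d, 0 < d & forall b, `|b0 - b| < d -> `|Kf b0 s - Kf b s| < e.
Proof.
move=> h0 h1 h2 h3.
pose F := fun b : R => (- s + 1 * b) * ln (- s + 1 * b) + ((1 + s + (-1) * b) * ln (1 + s + (-1) * b)
   + ((-1) * ((- s + 1 * b) * ln (0 + 1 * b)) + (-1) * ((1 + s + (-1) * b) * ln (1 + (-1) * b)))).
have FK : forall b, F b = Kf b s.
  move=> b; rewrite /F /Kf !mul1r !mulN1r !add0r.
  have e1 : - s + b = b - s by ring.
  have e2 : 1 + s - b = 1 - b + s by ring.
  rewrite e1 e2; ring.
have h1' : 0 < - s + 1 * b0 by rewrite mul1r addrC.
have h2' : 0 < 1 + s + (-1) * b0 by rewrite mulN1r; lra.
have h3' : 0 < 0 + 1 * b0 by rewrite mul1r add0r.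
have h4' : 0 < 1 + (-1) * b0 by rewrite mulN1r; lra.
have D := is_derive_add (is_derive_xlnaff h1') (is_derive_add (is_derive_xlnaff h2')
  (is_derive_add (is_derive_scale (-1) (is_derive_mul (is_derive_aff (-s) 1 b0) (is_derive_lnaff h3')))
    (is_derive_scale (-1) (is_derive_mul (is_derive_aff (1 + s) (-1) b0) (is_derive_lnaff h4'))))).
have := cont_eps (derive_cont D).
move=> H e e0; have [d d0 Hd] := H e e0; exists d => // b hb.
by rewrite -!FK; apply: Hd.
Qed.

Lemma ln_ge_1m (y : R) : 0 < y -> 1 - y^-1 <= ln y.
Proof.
move=> y0.
have h := @le_ln1Dx R (y^-1 - 1).
have yi : 0 < y^-1 by rewrite invr_gt0.
have hy : -1 < y^-1 - 1 by lra.
have := h hy; rewrite addrC subrK lnV ?posrE //; lra.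
Qed.

Lemma fenchel (A p q : R) : 0 < A -> 0 <= p -> 0 < q ->
  (ln A + 1) * p - A * q <= p * ln (p / q).
Proof.
move=> A0 p0 q0.
have [->|pp] := eqVneq p 0.
  rewrite mulr0 mul0r add0r; rewrite oppr_le0; exact: ltW (mulr_gt0 A0 q0).
have p1 : 0 < p by rewrite lt_def pp p0.
have e : p / q = A * (p / (q * A)).
  by field; apply/andP; split; apply: lt0r_neq0.
have hy : 0 < p / (q * A) by rewrite divr_gt0 // mulr_gt0.
have e2 : ln (A * (p / (q * A))) = ln A + ln (p / (q * A)) by rewrite lnM // posrE.
rewrite e e2.
have := ln_ge_1m hy.
have -> : (p / (q * A))^-1 = q * A / p by rewrite invf_div.
move=> H.
have H2 : p * (1 - q * A / p) <= p * ln (p / (q * A)) by rewrite ler_wpM2l.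
have E3 : p * (1 - q * A / p) = p - q * A by field; apply: lt0r_neq0.
rewrite E3 in H2.
rewrite mulrDr.
have E4 : (ln A + 1) * p - A * q = p * ln A + (p - q * A) by ring.
rewrite E4; lra.
Qed.
End RA2.


Section M.
Context d (T : measurableType d) (R : realType) (mu : {measure set T -> \bar R}).

Lemma mlt (f g : T -> R) : measurable_fun setT f -> measurable_fun setT g ->
  measurable [set x | f x < g x].
Proof.
move=> mf mg.
have -> : [set x | f x < g x] = setT `&` (fun x => f x < g x) @^-1` [set true].
  by apply/seteqP; split => x /=; [move=> h; split|case].
by apply: (measurable_fun_ltr mf mg measurableT).
Qed.

Lemma dens_int (q : T -> R) : is_density mu q -> mu.-integrable setT (EFin \o q).
Proof.
move=> [mq q0 q1]; apply/integrableP; split; first exact/measurable_EFinP.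
rewrite (eq_integral (fun x => (q x)%:E)); first by rewrite q1 ltry.
by move=> x _ /=; rewrite ger0_norm.
Qed.

Local Open Scope ereal_scope.
Lemma prob_split (q : T -> R) (A : set T) : is_density mu q -> measurable A ->
  prob_of mu q A + prob_of mu q (~` A) = 1.
Proof.
move=> [mq q0 q1] mA; rewrite /prob_of -q1 -integral_setU //.
- by rewrite setUv.
- exact: measurableC.
- by rewrite setUv; exact/measurable_EFinP.
- by rewrite disj_set2E setICr.
Qed.

Lemma prob_ge0 (q : T -> R) (A : set T) : is_density mu q -> 0 <= prob_of mu q A.
Proof. move=> [mq q0 q1]; apply: integral_ge0 => x _; rewrite lee_fin; exact: q0. Qed.

Lemma prob_fin (q : T -> R) (A : set T) : is_density mu q -> measurable A ->
  exists b : R, [/\ prob_of mu q A = b%:E, (0 <= b)%R, (b <= 1)%R & prob_of mu q (~` A) = (1 - b)%:E].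
Proof.
move=> hq mA; have hs := prob_split hq mA.
have h1 := prob_ge0 A hq; have h2 := prob_ge0 (~` A) hq.
move: hs h1 h2; case: (prob_of mu q A) => [b| |]; case: (prob_of mu q (~` A)) => [c| |] //=.
move=> /eqP; rewrite -EFinD eqe => /eqP hbc; rewrite !lee_fin => hb hc.
exists b; split => //; first by lra.
by congr EFin; lra.
Qed.

Local Close Scope ereal_scope.
Lemma mif (A : set T) (c1 c2 : R) : measurable A ->
  measurable_fun setT (fun x => if x \in A then c1 else c2).
Proof.
move=> mA.
have -> : (fun x => if x \in A then c1 else c2) = (fun x => c2 + (c1 - c2) * \1_A x).
  apply/funext => x; rewrite indicE; case: (x \in A) => /=; ring.
apply: measurable_funD; first exact: measurable_cst.
apply: measurable_funM; first exact: measurable_cst.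
exact: measurable_indic.
Qed.

Local Open Scope ereal_scope.
Lemma int_if (h : T -> R) (A : set T) (c1 c2 : R) :
  mu.-integrable setT (EFin \o h) -> measurable A ->
  \int[mu]_x ((h x * (if x \in A then c1 else c2))%:E) =
  c1%:E * \int[mu]_(x in A) (h x)%:E + c2%:E * \int[mu]_(x in ~` A) (h x)%:E.
Proof.
move=> ih mA.
have mh : measurable_fun setT h by move/integrableP: ih => [/measurable_EFinP].
have mCA : measurable (~` A) by exact: measurableC.
rewrite -[in LHS](setUv A).
rewrite integral_setU; last 4 first.
- exact: mA.
- exact: mCA.
- rewrite setUv; apply/measurable_EFinP; apply: measurable_funM; first exact: mh.
  exact: mif.
- by rewrite disj_set2E setICr.
have E1 : \int[mu]_(x in A) (h x * (if x \in A then c1 else c2))%:E = c1%:E * \int[mu]_(x in A) (h x)%:E.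
  transitivity (\int[mu]_(x in A) (c1%:E * (h x)%:E)).
    apply: eq_integral => x; rewrite inE => xA.
    by rewrite (mem_set xA) mulrC EFinM.
  apply: integralZl; first exact: mA.
  exact: (integrableS measurableT mA (@subsetT _ A) ih).
have E2 : \int[mu]_(x in ~` A) (h x * (if x \in A then c1 else c2))%:E = c2%:E * \int[mu]_(x in ~` A) (h x)%:E.
  transitivity (\int[mu]_(x in ~` A) (c2%:E * (h x)%:E)).
    apply: eq_integral => x; rewrite inE => xA.
    have -> : (x \in A) = false by apply/negbTE; apply/negP; rewrite inE.
    by rewrite mulrC EFinM.
  apply: integralZl; first exact: mCA.
  exact: (integrableS measurableT mCA (@subsetT _ (~` A)) ih).
by rewrite E1 E2.
Qed.

Lemma upper (q : T -> R) (A : set T) (b s : R) : is_density mu q -> measurable A ->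
  prob_of mu q A = b%:E -> (0 < s)%R -> (0 < b - s)%R -> (b < 1)%R ->
  exists p, [/\ is_density mu p, Vdist mu p q = (2 * s)%:E & KL mu p q = (Kf b s)%:E].
Proof.
move=> hq mA hb s0 bs b1.
have [mq q0 q1] := hq.
have [b' [hb' b'0 b'1 hc]] := prob_fin hq mA.
have hbb : b' = b by apply: EFin_inj; rewrite -hb'; exact: hb.
subst b'.
have iq := dens_int hq.
pose l := ((b - s) / b)%R; pose k := ((1 - b + s) / (1 - b))%R.
have b0 : (0 < b)%R by clear -s0 bs; lra.
have l0 : (0 < l)%R by rewrite /l divr_gt0.
have k0 : (0 < k)%R by rewrite /k divr_gt0; clear -s0 bs b1; lra.
have l1 : (l <= 1)%R by rewrite /l ler_pdivrMr // mul1r; clear -s0 bs b1; lra.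
have k1 : (1 <= k)%R by rewrite /k ler_pdivlMr ?mul1r; clear -s0 bs b1; lra.
pose p := fun x => (q x * (if x \in A then l else k))%R.
have mp : measurable_fun setT p by apply: measurable_funM; [exact: mq | exact: mif].
have p0 : forall x, (0 <= p x)%R.
  by move=> x; rewrite /p; apply: mulr_ge0; [exact: q0 | case: (x \in A); apply: ltW].
have hp : is_density mu p.
  split; [exact: mp | exact: p0 |].
  rewrite /p int_if //; rewrite /prob_of in hc hb'; rewrite hb' hc -!EFinM -EFinD.
  congr EFin; rewrite /l /k; field; apply/andP; split; apply: lt0r_neq0; clear -s0 bs b1; lra.
exists p; split.
- exact: hp.
- rewrite /Vdist.
  transitivity (\int[mu]_x ((q x * (if x \in A then 1 - l else k - 1))%:E)).
    apply: eq_integral => x _; congr EFin; rewrite /p.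
    case: (x \in A).
      rewrite -{2}(mulr1 (q x)) -mulrBr normrM (ger0_norm (q0 x)) ler0_norm; first ring.
      clear -l1; lra.
    rewrite -{2}(mulr1 (q x)) -mulrBr normrM (ger0_norm (q0 x)) ger0_norm; first by [].
    clear -k1; lra.
  rewrite int_if //; rewrite /prob_of in hc hb'; rewrite hb' hc -!EFinM -EFinD.
  congr EFin; rewrite /l /k; field; apply/andP; split; apply: lt0r_neq0; clear -s0 bs b1; lra.
have hac : abs_cont mu p q.
  move=> B mB hB; apply/eqP; rewrite eq_le; apply/andP; split; last exact: prob_ge0.
  rewrite -hB /prob_of.
  apply: (@le_trans _ _ (\int[mu]_(x in B) ((l + k)%:E * (q x)%:E))).
    apply: ge0_le_integral.
    - exact: mB.
    - by move=> x _; rewrite lee_fin; exact: p0.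
    - exact/measurable_EFinP/(measurable_funS measurableT (@subsetT _ B) mp).
    - apply/measurable_EFinP; apply: measurable_funM; first exact: measurable_cst.
      exact: (measurable_funS measurableT (@subsetT _ B) mq).
    - move=> x _; rewrite -EFinM lee_fin /p mulrC; apply: ler_wpM2r; first exact: q0.
      by case: (x \in A); clear -l0 k0; lra.
  rewrite integralZl; last 2 first.
  - exact: mB.
  - exact: (integrableS measurableT mB (@subsetT _ B) iq).
  move: hB; rewrite /prob_of => ->; rewrite mule0.
  exact: lexx.
rewrite /KL; have -> : `[< abs_cont mu p q >] = true by apply/asboolP.
transitivity (\int[mu]_x ((q x * (if x \in A then l * ln l else k * ln k))%:E)).
  apply: eq_integral => x _; congr EFin; rewrite /p.
  have [qx0|qx0] := eqVneq (q x) 0%R.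
    by rewrite qx0 !mul0r.
  case: (x \in A).
    have -> : (q x * l / q x = l)%R by rewrite mulrAC divff // mul1r.
    exact: (esym (mulrA _ _ _)).
  have -> : (q x * k / q x = k)%R by rewrite mulrAC divff // mul1r.
  exact: (esym (mulrA _ _ _)).
rewrite int_if //; rewrite /prob_of in hc hb'; rewrite hb' hc -!EFinM -EFinD.
congr EFin; rewrite /Kf /l /k !ln_div ?posrE; last 4 first.
- clear -s0 bs b1; lra.
- clear -s0 bs b1; lra.
- exact: bs.
- exact: b0.
have e1 : ((b - s) / b * b = b - s)%R by field; apply: lt0r_neq0.
have e2 : ((1 - b + s) / (1 - b) * (1 - b) = 1 - b + s)%R.
  by field; apply: lt0r_neq0; clear -b1; lra.
field; apply/andP; split; apply: lt0r_neq0; clear -s0 bs b1; lra.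
Qed.
End M.


Section M2.
Context d (T : measurableType d) (R : realType) (mu : {measure set T -> \bar R}).
Local Open Scope ereal_scope.

Lemma mono_int (f g : T -> R) : measurable_fun setT f -> measurable_fun setT g ->
  (forall x, (g x <= f x)%R) -> \int[mu]_x (g x)%:E <= \int[mu]_x (f x)%:E.
Proof.
move=> mf mg fg.
have mf' : measurable_fun setT (EFin \o f) by exact/measurable_EFinP.
have mg' : measurable_fun setT (EFin \o g) by exact/measurable_EFinP.
rewrite integralE [leRHS]integralE; apply: leeB.
- apply: ge0_le_integral.
  + exact: measurableT.
  + by move=> x _; exact: funepos_ge0.
  + exact: measurable_funepos.
  + exact: measurable_funepos.
  + move=> x _; apply: (@funepos_le _ _ setT (EFin \o g) (EFin \o f)); last by rewrite inE.
    by move=> y _; rewrite /= lee_fin.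
- apply: ge0_le_integral.
  + exact: measurableT.
  + by move=> x _; exact: funeneg_ge0.
  + exact: measurable_funeneg.
  + exact: measurable_funeneg.
  + move=> x _; apply: (@funeneg_le _ _ setT (EFin \o g) (EFin \o f)); last by rewrite inE.
    by move=> y _; rewrite /= lee_fin.
Qed.

Lemma probZ0 (p q : T -> R) : is_density mu p -> is_density mu q -> abs_cont mu p q ->
  measurable (~` [set x | (0 < q x)%R]) /\ prob_of mu p (~` [set x | (0 < q x)%R]) = 0.
Proof.
move=> [mp p0 p1] [mq q0 q1] hac.
have mZ : measurable (~` [set x | (0 < q x)%R]).
  by apply: measurableC; apply: mlt; [exact: measurable_cst | exact: mq].
split; first exact: mZ.
apply: hac; first exact: mZ.
rewrite /prob_of; transitivity (\int[mu]_(x in ~` [set x | (0 < q x)%R]) (cst 0 x)).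
  apply: eq_integral => x; rewrite inE /= => hx; congr EFin.
  by apply/eqP; rewrite eq_le q0 andbT; rewrite real_leNgt ?num_real //; apply/negP.
exact: integral0.
Qed.

Lemma zero_int (p q : T -> R) (phi : T -> R) (C : R) : is_density mu p -> is_density mu q ->
  abs_cont mu p q -> measurable_fun setT phi -> (0 <= C)%R ->
  (forall x, ~ (0 < q x)%R -> (`|phi x| <= C * p x)%R) ->
  \int[mu]_(x in ~` [set x | (0 < q x)%R]) (phi x)%:E = 0.
Proof.
move=> hp hq hac mphi C0 hb.
have [mZ PZ] := probZ0 hp hq hac.
have [mp p0 p1] := hp.
apply/eqP; rewrite -abse_eq0 eq_le abse_ge0 andbT.
apply: (le_trans (le_abse_integral mu mZ _)).
  exact/measurable_EFinP/(measurable_funS measurableT (@subsetT _ _) mphi).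
apply: (@le_trans _ _ (\int[mu]_(x in ~` [set x | (0 < q x)%R]) (C%:E * (p x)%:E))).
  apply: ge0_le_integral.
  - exact: mZ.
  - by move=> x _; exact: abse_ge0.
  - apply: measurableT_comp; first exact: abse_measurable.
    exact/measurable_EFinP/(measurable_funS measurableT (@subsetT _ _) mphi).
  - apply/measurable_EFinP; apply: measurable_funM; first exact: measurable_cst.
    exact: (measurable_funS measurableT (@subsetT _ _) mp).
  - by move=> x hx; rewrite /= -EFinM lee_fin; apply: hb.
rewrite ge0_integralZl_EFin.
- by move: PZ; rewrite /prob_of => ->; rewrite mule0.
- exact: mZ.
- by move=> x _; rewrite lee_fin; exact: p0.
- exact/measurable_EFinP/(measurable_funS measurableT (@subsetT _ _) mp).
- exact: C0.
Qed.

Lemma split_pos (q phi : T -> R) : measurable_fun setT q -> measurable_fun setT phi ->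
  \int[mu]_x (phi x)%:E = \int[mu]_(x in [set x | (0 < q x)%R]) (phi x)%:E +
     \int[mu]_(x in ~` [set x | (0 < q x)%R]) (phi x)%:E.
Proof.
move=> mq mphi.
have mP : measurable [set x | (0 < q x)%R] by apply: mlt; [exact: measurable_cst | exact: mq].
rewrite -[in LHS](setUv [set x | (0 < q x)%R]) integral_setU.
- by [].
- exact: mP.
- exact: measurableC.
- by rewrite setUv; exact/measurable_EFinP.
- by rewrite disj_set2E setICr.
Qed.

Lemma agree_int (p q phi psi : T -> R) (C : R) : is_density mu p -> is_density mu q ->
  abs_cont mu p q -> measurable_fun setT phi -> measurable_fun setT psi -> (0 <= C)%R ->
  (forall x, (0 < q x)%R -> phi x = psi x) ->
  (forall x, ~ (0 < q x)%R -> (`|phi x| <= C * p x)%R) ->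
  (forall x, ~ (0 < q x)%R -> (`|psi x| <= C * p x)%R) ->
  \int[mu]_x (phi x)%:E = \int[mu]_x (psi x)%:E.
Proof.
move=> hp hq hac mphi mpsi C0 e b1 b2.
have mq : measurable_fun setT q by case: hq.
rewrite (split_pos mq mphi) (split_pos mq mpsi).
rewrite (zero_int hp hq hac mphi C0 b1) (zero_int hp hq hac mpsi C0 b2).
congr (_ + _).
apply: eq_integral => x; rewrite inE => hx; congr EFin; exact: e.
Qed.

Lemma integrable_if (h : T -> R) (A : set T) (c1 c2 : R) :
  mu.-integrable setT (EFin \o h) -> measurable A ->
  mu.-integrable setT (EFin \o (fun x => h x * (if x \in A then c1 else c2))%R).
Proof.
move=> ih mA.
have mh : measurable_fun setT h by move/integrableP: ih => [/measurable_EFinP].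
apply: (@le_integrable _ _ _ mu setT measurableT _ (fun x => (`|c1| + `|c2|)%:E * (h x)%:E)).
- apply/measurable_EFinP; apply: measurable_funM; first exact: mh.
  exact: mif.
- move=> x _; rewrite /=.
  rewrite lee_fin !normrM mulrC ler_wpM2r.
  + by [].
  + exact: normr_ge0.
  + rewrite (ger0_norm (addr_ge0 (normr_ge0 c1) (normr_ge0 c2))).
    case: (x \in A).
    * by rewrite lerDl normr_ge0.
    * by rewrite lerDr normr_ge0.
- exact: integrableZl.
Qed.

Lemma int_if2 (h1 h2 : T -> R) (A : set T) (a1 a2 b1 b2 : R) :
  mu.-integrable setT (EFin \o h1) -> mu.-integrable setT (EFin \o h2) -> measurable A ->
  \int[mu]_x ((h1 x * (if x \in A then a1 else a2) + h2 x * (if x \in A then b1 else b2))%:E) =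
  a1%:E * \int[mu]_(x in A) (h1 x)%:E + a2%:E * \int[mu]_(x in ~` A) (h1 x)%:E +
  (b1%:E * \int[mu]_(x in A) (h2 x)%:E + b2%:E * \int[mu]_(x in ~` A) (h2 x)%:E).
Proof.
move=> i1 i2 mA.
rewrite -(int_if a1 a2 i1 mA) -(int_if b1 b2 i2 mA).
rewrite -(integralD_EFin measurableT (integrable_if a1 a2 i1 mA) (integrable_if b1 b2 i2 mA)).
by apply: eq_integral => x _; rewrite /= EFinD.
Qed.
End M2.


Section M3.
Context d (T : measurableType d) (R : realType) (mu : {measure set T -> \bar R}).
Local Open Scope ereal_scope.

Lemma lower_main (p q : T -> R) : is_density mu p -> is_density mu q -> abs_cont mu p q ->
  exists P1 Q1 : R, [/\ rangeQ mu q Q1, (0 <= Q1)%R, (P1 <= 1)%R,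
    Vdist mu p q = (2 * (P1 - Q1))%:E &
    forall A B, (0 < A)%R -> (0 < B)%R ->
      (LB A B P1 Q1)%:E <= \int[mu]_x (p x * ln (p x / q x))%:E].
Proof.
move=> hp hq hac.
have [mp p0 p1] := hp; have [mq q0 q1] := hq.
have ip := dens_int hp; have iq := dens_int hq.
pose S := [set x | (0 < q x)%R] `&` [set x | (q x < p x)%R].
have mS : measurable S.
  apply: measurableI; apply: mlt; [exact: measurable_cst|exact: mq|exact: mq|exact: mp].
have [P1 [hP1 P10 P11 hP2]] := prob_fin hp mS.
have [Q1 [hQ1 Q10 Q11 hQ2]] := prob_fin hq mS.
have qZ : forall x, ~ (0 < q x)%R -> q x = 0%R.
  move=> x hx; apply/eqP; rewrite eq_le q0 andbT; rewrite real_leNgt ?num_real //; exact/negP.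
have notS : forall x, ~ (0 < q x)%R -> (x \in S) = false.
  by move=> x hx; apply/negbTE/negP; rewrite inE => -[].
exists P1, Q1; split.
- by exists S; split; [exact: mS | exact: hQ1].
- exact: Q10.
- exact: P11.
- rewrite /Vdist.
  transitivity (\int[mu]_x ((p x * (if x \in S then 1 else -1) + q x * (if x \in S then -1 else 1))%R%:E)).
    apply: (agree_int (C := 1%R) hp hq hac).
    + apply: measurableT_comp; first exact: normr_measurable.
      exact: measurable_funB.
    + apply: measurable_funD; apply: measurable_funM.
      * exact: mp.
      * exact: mif.
      * exact: mq.
      * exact: mif.
    + exact: ler01.
    + move=> x hx; have [xS|xS] := boolP (x \in S).
        move: (xS); rewrite inE => -[_ /= hlt].
        by rewrite gtr0_norm ?subr_gt0 //; ring.
      have hle : (p x <= q x)%R.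
        rewrite real_leNgt ?num_real //; apply/negP => hlt; move/negP: xS; apply.
        by rewrite inE.
      by rewrite ler0_norm ?subr_le0 //; ring.
    + move=> x hx; rewrite (qZ x hx) subr0 mul1r normr_id ger0_norm; [exact: lexx | exact: p0].
    + move=> x hx; rewrite (notS x hx) (qZ x hx) mul0r addr0 mul1r mulrN1 normrN ger0_norm; [exact: lexx | exact: p0].
  rewrite int_if2; [|exact: ip|exact: iq|exact: mS].
  move: hP1 hP2 hQ1 hQ2; rewrite /prob_of => -> -> -> ->.
  rewrite -!EFinM -!EFinD; congr EFin; ring.
- move=> A B A0 B0.
  pose g := fun x => (p x * (if x \in S then ln A + 1 else ln B + 1) + q x * (if x \in S then - A else - B))%R.
  pose g' := fun x => if (0 < q x)%R then g x else 0%R.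
  pose f := fun x => (p x * ln (p x / q x))%R.
  have mP : measurable_fun setT (fun x => (0 < q x)%R).
    by apply: measurable_fun_ltr; [exact: measurable_cst | exact: mq].
  have mg : measurable_fun setT g.
    apply: measurable_funD; apply: measurable_funM.
    * exact: mp.
    * exact: mif.
    * exact: mq.
    * exact: mif.
  have mg' : measurable_fun setT g'.
    apply: measurable_fun_ifT; [exact: mP | exact: mg | exact: measurable_cst].
  have fE : f = fun x => if (0 < q x)%R then (p x * (ln (p x) - ln (q x)))%R else 0%R.
    apply/funext => x; rewrite /f.
    case: ifPn => hx.
      have [->|px] := eqVneq (p x) 0%R; first by rewrite !mul0r.
      have ppos : (0 < p x)%R by rewrite lt_def px p0.
      by rewrite ln_div // posrE.
    have -> : q x = 0%R by apply: qZ; apply/negP.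
    by rewrite invr0 mulr0 ln0 // mulr0.
  have mf : measurable_fun setT f.
    rewrite fE; apply: measurable_fun_ifT; [exact: mP | | exact: measurable_cst].
    apply: measurable_funM; first exact: mp.
    apply: measurable_funB; apply: measurableT_comp; try exact: measurable_ln.
    + exact: mp.
    + exact: mq.
  have E1 : (LB A B P1 Q1)%:E = \int[mu]_x (g x)%:E.
    rewrite /g int_if2; [|exact: ip|exact: iq|exact: mS].
    move: hP1 hP2 hQ1 hQ2; rewrite /prob_of => -> -> -> ->.
    rewrite -!EFinM -!EFinD; congr EFin; rewrite /LB; ring.
  have E2 : \int[mu]_x (g x)%:E = \int[mu]_x (g' x)%:E.
    apply: (agree_int (C := (`|ln A + 1| + `|ln B + 1|)%R) hp hq hac mg mg').
    + by rewrite addr_ge0.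
    + by move=> x hx; rewrite /g' hx.
    + move=> x hx; rewrite /g (notS x hx) (qZ x hx) mul0r addr0 normrM (ger0_norm (p0 x)).
      rewrite [X in (_ <= X)%R]mulrC; apply: ler_wpM2l; first exact: p0.
      by rewrite -subr_ge0 addrK normr_ge0.
    + move=> x hx; rewrite /g'; have -> : (0 < q x)%R = false by apply/negP.
      by rewrite normr0 mulr_ge0 // addr_ge0.
  rewrite E1 E2; apply: mono_int; [exact: mf | exact: mg' |].
  move=> x; rewrite /g' /f; case: ifPn => hx.
    rewrite /g; case: (x \in S); rewrite mulrC [X in (_ + X)%R]mulrC mulNr.
    * exact: fenchel.
    * exact: fenchel.
  have -> : q x = 0%R by apply: qZ; apply/negP.
  by rewrite invr0 mulr0 ln0 // mulr0.
Qed.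
End M3.


Section F.
Variable R : realType.

Lemma cont_lb (f : R -> R) (s : R) (K : \bar R) : 0 < s ->
  (forall e, 0 < e -> exists2 d, 0 < d & forall t, `|s - t| < d -> `|f s - f t| < e) ->
  (forall t, 0 <= t -> t < s -> ((f t)%:E <= K)%E) -> ((f s)%:E <= K)%E.
Proof.
move=> s0 hc hK.
case: K hK => [r| |] hK; last 2 first.
- by rewrite leey.
- by have := hK 0 (lexx _) s0; rewrite leeNy_eq.
rewrite lee_fin leNgt; apply/negP => hr.
have [d d0 hd] := hc (f s - r) (ltac:(rewrite subr_gt0; exact: hr)).
have [t [t0 ts std]] : exists t, [/\ 0 <= t, t < s & s - t < d].
  case: (lerP d s) => h; [exists (s - d / 2) | exists (s / 2)]; split; lra.
have := hd t; rewrite ger0_norm; last by lra.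
move=> /(_ std) H.
have := hK t t0 ts; rewrite lee_fin => Ht.
have := ler_norm (f s - f t); lra.
Qed.
End F.

Section Bal.
Context d (T : measurableType d) (R : realType) (mu : {measure set T -> \bar R}).
Variable q : T -> R.
Hypothesis Hq : is_density mu q.

Lemma range_one : rangeQ mu q 1.
Proof. exists setT; split; [exact: measurableT | by case: Hq]. Qed.

Lemma range_prop x : rangeQ mu q x -> [/\ 0 <= x, x <= 1 & rangeQ mu q (1 - x)].
Proof.
move=> [A [mA hA]].
have [b [hb b0 b1 hc]] := prob_fin Hq mA.
have xb : x = b by apply: EFin_inj; rewrite -hA hb.
subst x; split => //.
exists (~` A); split; [exact: measurableC | exact: hc].
Qed.

Definition Sb := [set x | rangeQ mu q x /\ 1 / 2 <= x].

Lemma Sb_lb : has_lbound Sb.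
Proof. by exists (1/2) => x [_ hx]. Qed.

Lemma Sb_ne : Sb !=set0.
Proof. exists 1; split; [exact: range_one | lra]. Qed.

Lemma bal_le x : Sb x -> balance mu q <= x.
Proof. move=> hx; exact: (ge_inf Sb_lb hx). Qed.

Lemma bal_le1 : balance mu q <= 1.
Proof. apply: bal_le; split; [exact: range_one | lra]. Qed.

Lemma range_split y : rangeQ mu q y -> balance mu q <= y \/ y <= 1 - balance mu q.
Proof.
move=> hy; have [y0 y1 hy'] := range_prop hy.
case: (lerP (1/2) y) => h.
  by left; apply: bal_le; split.
right; have : balance mu q <= 1 - y by apply: bal_le; split => //; lra.
lra.
Qed.
End Bal.

Unset Implicit Arguments.
Theorem theorem1 (d : measure_display) (T : measurableType d) (R : realType)
  (mu : {measure set T -> \bar R}) (Hmu : sigma_finite setT mu)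
  (q : T -> R) (Hq : is_density mu q)
  (Hbeta : 1 / 2 < balance mu q)
  (v : R) (Hv0 : 0 < v) (Hv1 : v < 4 * (balance mu q - 1 / 2)) :
  Dstar mu v q = KL2 (balance mu q - v / 2) (balance mu q).
Proof.
set b := balance mu q in Hbeta Hv1 *.
have b1 : b <= 1 by exact: bal_le1.
set s := v / 2.
have s0 : 0 < s by rewrite /s; lra.
have sb : s < 2 * b - 1 by rewrite /s; lra.
have lowerK : forall p, is_density mu p -> (v%:E <= Vdist mu p q)%E -> abs_cont mu p q ->
   exists P1 Q1, [/\ rangeQ mu q Q1, 0 <= Q1, P1 <= 1, s <= P1 - Q1 &
     forall A B, 0 < A -> 0 < B -> ((LB A B P1 Q1)%:E <= KL mu p q)%E].
  move=> p hp hv hac.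
  have [P1 [Q1 [hr Q0 P1le hV hLB]]] := lower_main hp Hq hac.
  exists P1, Q1; split => //.
    by move: hv; rewrite hV lee_fin /s; lra.
  move=> A B A0 B0; rewrite /KL; have -> : `[< abs_cont mu p q >] = true by apply/asboolP.
  exact: hLB.
case: (ltrP b 1) => hb1; last first.
  have hb : b = 1 by apply/eqP; rewrite eq_le b1 hb1.
  have -> : KL2 (b - s) b = +oo%E.
    rewrite hb /KL2 /klterm.
    have -> : (1 - s == 0) = false by apply/negbTE; apply: lt0r_neq0; lra.
    have -> : ((1 : R) == 0) = false by apply/negbTE; exact: oner_neq0.
    have -> : (1 - (1 - s) == 0) = false by apply/negbTE; apply: lt0r_neq0; lra.
    by rewrite subrr eqxx /= addey.
  apply/eqP; rewrite eq_le leey /=.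
  apply: le_ereal_inf_tmp => e [p [hp hv hKL]]; rewrite -hKL.
  have [hac|hac] := pselect (abs_cont mu p q); last first.
    by rewrite /KL; have -> : `[< abs_cont mu p q >] = false by apply/asboolPn.
  have [P1 [Q1 [hr Q0 P1le sPQ hLB]]] := lowerK p hp hv hac.
  have Q1z : Q1 = 0.
    case: (range_split Hq hr); rewrite -/b hb => h; last by apply/eqP; rewrite eq_le Q0; lra.
    lra.
  have P1pos : 0 < P1 by lra.
  rewrite (eq_infty (x := KL mu p q)) ?lexx // => r.
  have := hLB (expR (r / P1)) 1 (expR_gt0 _) ltr01.
  rewrite /LB expRK ln1 Q1z.
  have -> : (r / P1 + 1) * P1 - expR (r / P1) * 0 + (0 + 1) * (1 - P1) - 1 * (1 - 0) = r.
    by field; apply: lt0r_neq0.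
  by [].
have bs0 : 0 < b - s by lra.
have b0 : 0 < b by lra.
have KE : KL2 (b - s) b = (Kf b s)%:E.
  rewrite /KL2 /klterm.
  have -> : (b - s == 0) = false by apply/negbTE; apply: lt0r_neq0.
  have -> : (b == 0) = false by apply/negbTE; apply: lt0r_neq0.
  have -> : (1 - (b - s) == 0) = false by apply/negbTE; apply: lt0r_neq0; lra.
  have -> : (1 - b == 0) = false by apply/negbTE; apply: lt0r_neq0; lra.
  rewrite -EFinD; congr EFin; rewrite /Kf.
  have -> : 1 - (b - s) = 1 - b + s by ring.
  rewrite !ln_div ?posrE; [by [] | lra | lra | lra | lra].
rewrite KE; apply/le_anti/andP; split.
  apply/lee_addgt0Pr => e e0.
  have [dl dl0 hdl] := Kf_cont_b (ltW s0) bs0 b0 hb1 e0.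
  have [m [m0 md mb]] : exists m, [/\ 0 < m, m <= dl & m <= 1 - b].
    case: (lerP dl (1 - b)) => h; [exists dl | exists (1 - b)]; split; lra.
  have hinf : inf (Sb mu q) < b + m by rewrite -[inf _]/b; lra.
  have [y Sy yl] := inf_lt (Sb_ne Hq) hinf.
  have by1 : b <= y by exact: bal_le.
  case: Sy => [[A [mA hA]] _].
  have [p [hp hV hK]] := upper Hq mA hA s0 (ltac:(lra)) (ltac:(lra)).
  apply: (@le_trans _ _ (Kf y s)%:E).
    apply: ereal_inf_lbound; exists p; split => //.
    by rewrite hV /s; have -> : 2 * (v / 2) = v by field.
  rewrite -EFinD lee_fin.
  have := hdl y (ltac:(rewrite distrC ger0_norm; lra)).
  move=> H; have := ler_norm (Kf y s - Kf b s); rewrite distrC; lra.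
apply: le_ereal_inf_tmp => e [p [hp hv hKL]]; rewrite -hKL.
have [hac|hac] := pselect (abs_cont mu p q); last first.
  rewrite /KL; have -> : `[< abs_cont mu p q >] = false by apply/asboolPn.
  by rewrite leey.
have [P1 [Q1 [hr Q0 P1le sPQ hLB]]] := lowerK p hp hv hac.
case: (range_split Hq hr); rewrite -/b => h.
  have hcs := Kf_cont_s bs0 (ltac:(lra) : 0 < 1 - b + s).
  apply: (cont_lb s0 hcs) => t t0 ts.
  have t1 : t < 1 - b by lra.
  have A0 : 0 < (b + t) / b by apply: divr_gt0; lra.
  have B0 : 0 < (1 - b - t) / (1 - b) by apply: divr_gt0; lra.
  apply: le_trans (hLB _ _ A0 B0).
  rewrite lee_fin; apply: caseII; [exact: Hbeta | exact: hb1 | exact: t0 | exact: t1 | exact: h | lra].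
have A0 : 0 < (1 - b + s) / (1 - b) by apply: divr_gt0; lra.
have B0 : 0 < (b - s) / b by apply: divr_gt0; lra.
apply: le_trans (hLB _ _ A0 B0).
rewrite lee_fin; apply: caseI; [exact: Hbeta | exact: hb1 | lra | lra | exact: h | exact: sPQ].
Qed.
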